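(* There is an absolute constant $c_1>0$ such that for each $b\in(0,\pi]$, each $n\in\mathbb{N}$, any linear function $l(x)=ax+k$ ($a,k\in\mathbb{R}$) and every trigonometric polynomial $T_n\in\mathcal{T}_n$, $$\|F_1+l-T_n\|_{[-b,b]}\ge\frac{c_1 b}{n},$$ where $F_1(x)=|x|$.
   Context: $\mathcal{T}_n$ is the space of real trigonometric polynomials of degree $\le n$. For a function $g$ on $[a,b]$, $\|g\|_{[a,b]}:=\max_{x\in[a,b]}|g(x)|$. *)

(* Defs.v *)
From Stdlib Require Import Reals.
Open Scope R_scope.

Fixpoint trig_sum (a b : nat -> R) (n : nat) (x : R) : R :=
  match n with
  | O => a O
  | S m => trig_sum a b m x + a (S m) * cos (INR (S m) * x)
                           + b (S m) * sin (INR (S m) * x)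
  end.

Definition is_trig_poly (n : nat) (T : R -> R) : Prop :=
  exists a b : nat -> R, forall x, T x = trig_sum a b n x.

Definition F1 (x : R) : R := Rabs x.

(* Main.v *)
Require Import Defs.
From Stdlib Require Import Reals Lra Lia Psatz Classical Arith ZArith.
Open Scope R_scope.


Fixpoint sm (m : nat) (f : nat -> R) : R :=
  match m with O => 0 | S p => sm p f + f p end.

Lemma sm_ext m f g : (forall i, (i < m)%nat -> f i = g i) -> sm m f = sm m g.
Proof. induction m; simpl; intros H; auto. rewrite IHm by (intros; apply H; lia). rewrite H by lia; auto. Qed.
Lemma sm_plus m f g : sm m (fun i => f i + g i) = sm m f + sm m g.
Proof. induction m; simpl; [ring| rewrite IHm; ring]. Qed.
Lemma sm_minus m f g : sm m (fun i => f i - g i) = sm m f - sm m g.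
Proof. induction m; simpl; [ring| rewrite IHm; ring]. Qed.
Lemma sm_scal m c f : sm m (fun i => c * f i) = c * sm m f.
Proof. induction m; simpl; [ring| rewrite IHm; ring]. Qed.
Lemma sm_scalr m c f : sm m (fun i => f i * c) = sm m f * c.
Proof. induction m; simpl; [ring| rewrite IHm; ring]. Qed.
Lemma sm_zero m : sm m (fun _ => 0) = 0.
Proof. induction m; simpl; [ring| rewrite IHm; ring]. Qed.
Lemma sm_const m c : sm m (fun _ => c) = INR m * c.
Proof. induction m; simpl sm; [simpl; ring| rewrite IHm, S_INR; ring]. Qed.
Lemma sm_swap m p f : sm m (fun i => sm p (fun j => f i j)) = sm p (fun j => sm m (fun i => f i j)).
Proof. induction m; simpl. - rewrite sm_zero; auto. - rewrite IHm, <- sm_plus; auto. Qed.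
Lemma sm_mul m p f g : sm m f * sm p g = sm m (fun i => sm p (fun j => f i * g j)).
Proof. rewrite <- sm_scalr. apply sm_ext; intros. rewrite <- sm_scal. auto. Qed.
Lemma sm_abs m f : Rabs (sm m f) <= sm m (fun i => Rabs (f i)).
Proof. induction m; simpl. - rewrite Rabs_R0; lra. - eapply Rle_trans; [apply Rabs_triang|]. lra. Qed.
Lemma sm_le m f g : (forall i, (i<m)%nat -> f i <= g i) -> sm m f <= sm m g.
Proof. induction m; simpl; intros H; [lra|]. assert (H1 := H m (Nat.lt_succ_diag_r m)).
 assert (sm m f <= sm m g) by (apply IHm; intros; apply H; lia). lra. Qed.
Lemma sm_delta m p g : sm m (fun i => if Nat.eq_dec i p then g i else 0) = if lt_dec p m then g p else 0.
Proof. induction m; simpl.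
 - destruct (lt_dec p 0); [lia|auto].
 - rewrite IHm. destruct (Nat.eq_dec m p); destruct (lt_dec p m); destruct (lt_dec p (S m)); subst; try lia; ring. Qed.
Lemma sm_count m p : sm m (fun i => if lt_dec i p then 1 else 0) = INR (Nat.min m p).
Proof. induction m; simpl sm.
 - simpl; auto.
 - rewrite IHm. destruct (lt_dec m p).
   + rewrite !Nat.min_l by lia. rewrite S_INR; ring.
   + rewrite !Nat.min_r by lia. ring. Qed.

Lemma tel_cos m a : 2*sin(a/2) * sm m (fun i => cos(INR i * a)) = sin((INR m - /2)*a) + sin(a/2).
Proof. induction m; simpl sm.
 - simpl. replace ((0 - /2)*a) with (-(a/2)) by field. rewrite sin_neg. ring.
 - rewrite Rmult_plus_distr_l, IHm, S_INR.
   replace ((INR m + 1 - /2)*a) with (INR m * a + a/2) by field.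
   replace ((INR m - /2)*a) with (INR m * a - a/2) by field.
   rewrite sin_plus, sin_minus. ring. Qed.
Lemma tel_sin m a : 2*sin(a/2) * sm m (fun i => sin(INR i * a)) = cos(a/2) - cos((INR m - /2)*a).
Proof. induction m; simpl sm.
 - simpl. replace ((0 - /2)*a) with (-(a/2)) by field. rewrite cos_neg. ring.
 - rewrite Rmult_plus_distr_l, IHm, S_INR.
   replace ((INR m + 1 - /2)*a) with (INR m * a + a/2) by field.
   replace ((INR m - /2)*a) with (INR m * a - a/2) by field.
   rewrite cos_plus, cos_minus. ring. Qed.

Definition node (M i : nat) : R := 2 * PI * INR i / INR M.

Lemma orth_pos M p : (0 < p < M)%nat ->
  sm M (fun i => cos (INR p * node M i)) = 0 /\ sm M (fun i => sin (INR p * node M i)) = 0.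
Proof. intros Hp. set (a := 2 * PI * INR p / INR M).
 assert (HM : 0 < INR M) by (apply lt_0_INR; lia).
 assert (Hpp : 0 < INR p) by (apply lt_0_INR; lia).
 assert (HpM : INR p < INR M) by (apply lt_INR; lia).
 assert (Hs : 0 < sin (a/2)).
 { apply sin_gt_0; unfold a.
   - assert (0 < PI) by apply PI_RGT_0. apply Rdiv_lt_0_compat; [|lra].
     apply Rdiv_lt_0_compat; [|lra]. nra.
   - assert (0 < PI) by apply PI_RGT_0. 
     apply (Rmult_lt_reg_r (2 * INR M)); [lra|]. field_simplify; [|lra]. nra. }
 assert (E : forall i, INR p * node M i = INR i * a).
 { intros; unfold node, a; field; lra. }
 assert (EM : (INR M - /2) * a = - (a/2) + 2 * INR p * PI).
 { unfold a; field; lra. }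
 split.
 - assert (T := tel_cos M a). rewrite EM, sin_period, sin_neg in T.
   rewrite (sm_ext _ _ (fun i => cos (INR i * a))) by (intros; rewrite E; auto).
   apply (Rmult_eq_reg_l (2 * sin (a/2))); [|lra]. rewrite T; ring.
 - assert (T := tel_sin M a). rewrite EM, cos_period, cos_neg in T.
   rewrite (sm_ext _ _ (fun i => sin (INR i * a))) by (intros; rewrite E; auto).
   apply (Rmult_eq_reg_l (2 * sin (a/2))); [|lra]. rewrite T; ring. Qed.

Lemma orth_Z M (z : Z) : (Z.abs z < Z.of_nat M)%Z ->
  sm M (fun i => cos (IZR z * node M i)) = (if Z.eq_dec z 0 then INR M else 0) /\
  sm M (fun i => sin (IZR z * node M i)) = 0.
Proof. intros Hz. destruct (Z.eq_dec z 0) as [->|Hn].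
 - split.
   + rewrite (sm_ext _ _ (fun _ => 1)) by (intros; rewrite Rmult_0_l, cos_0; auto). rewrite sm_const; ring.
   + rewrite (sm_ext _ _ (fun _ => 0)) by (intros; rewrite Rmult_0_l, sin_0; auto). apply sm_zero.
 - set (p := Z.to_nat (Z.abs z)).
   assert (Hp : (0 < p < M)%nat) by (unfold p; lia).
   destruct (orth_pos M p Hp) as [H1 H2].
   assert (Hzp : IZR z = INR p \/ IZR z = - INR p).
   { unfold p. rewrite INR_IZR_INZ, Z2Nat.id by lia.
     destruct (Z_le_gt_dec 0 z).
     - left. rewrite Z.abs_eq by lia. auto.
     - right. rewrite Z.abs_neq by lia. rewrite opp_IZR. ring. }
   destruct Hzp as [E|E]; rewrite E; split; auto.
   + rewrite <- H1. apply sm_ext; intros. rewrite Ropp_mult_distr_l_reverse, cos_neg; auto.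
   + rewrite (sm_ext _ _ (fun i => - sin (INR p * node M i))).
     * rewrite <- (Rmult_1_l (sm _ _)). replace (sm M (fun i => - sin (INR p * node M i))) with (-1 * sm M (fun i => sin (INR p * node M i))).
       rewrite H2; ring. rewrite <- sm_scal. apply sm_ext; intros; ring.
     * intros. rewrite Ropp_mult_distr_l_reverse, sin_neg; auto. Qed.


Definition Kf (m : nat) (x : R) : R :=
  sm m (fun l => sm m (fun l' => INR l' * sin ((INR l' - INR l) * x))).

Lemma INR_Zdiff a b : INR a - INR b = IZR (Z.of_nat a - Z.of_nat b).
Proof. rewrite minus_IZR, <- !INR_IZR_INZ; auto. Qed.

Lemma inner_ss M l l' j : (l' + j < M + l)%nat -> (l + j < M + l')%nat ->
  sm M (fun i => sin ((INR l' - INR l) * node M i) * sin (INR j * node M i)) =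
  INR M / 2 * ((if Nat.eq_dec l' (l + j) then 1 else 0) - (if Nat.eq_dec l (l' + j) then 1 else 0)).
Proof. intros H1 H2.
 rewrite (sm_ext _ _ (fun i => /2 * (cos (IZR (Z.of_nat l' - Z.of_nat l - Z.of_nat j) * node M i)
      - cos (IZR (Z.of_nat l' - Z.of_nat l + Z.of_nat j) * node M i)))).
 2:{ intros i _. rewrite minus_IZR, plus_IZR, <- INR_Zdiff, <- INR_IZR_INZ.
     replace ((INR l' - INR l - INR j) * node M i) with ((INR l' - INR l) * node M i - INR j * node M i) by ring.
     replace ((INR l' - INR l + INR j) * node M i) with ((INR l' - INR l) * node M i + INR j * node M i) by ring.
     rewrite cos_minus, cos_plus. field. }
 rewrite sm_scal, sm_minus.
 destruct (orth_Z M (Z.of_nat l' - Z.of_nat l - Z.of_nat j)) as [E1 _]; [lia|].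
 destruct (orth_Z M (Z.of_nat l' - Z.of_nat l + Z.of_nat j)) as [E2 _]; [lia|].
 rewrite E1, E2.
 destruct (Z.eq_dec _ 0); destruct (Z.eq_dec _ 0); destruct (Nat.eq_dec l' (l+j)); destruct (Nat.eq_dec l (l'+j));
   try lia; field. Qed.

Lemma inner_sc M l l' j : (l' + j < M + l)%nat -> (l + j < M + l')%nat ->
  sm M (fun i => sin ((INR l' - INR l) * node M i) * cos (INR j * node M i)) = 0.
Proof. intros H1 H2.
 rewrite (sm_ext _ _ (fun i => /2 * (sin (IZR (Z.of_nat l' - Z.of_nat l + Z.of_nat j) * node M i)
      + sin (IZR (Z.of_nat l' - Z.of_nat l - Z.of_nat j) * node M i)))).
 2:{ intros i _. rewrite minus_IZR, plus_IZR, <- INR_Zdiff, <- INR_IZR_INZ.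
     replace ((INR l' - INR l - INR j) * node M i) with ((INR l' - INR l) * node M i - INR j * node M i) by ring.
     replace ((INR l' - INR l + INR j) * node M i) with ((INR l' - INR l) * node M i + INR j * node M i) by ring.
     rewrite sin_minus, sin_plus. field. }
 rewrite sm_scal, sm_plus.
 destruct (orth_Z M (Z.of_nat l' - Z.of_nat l - Z.of_nat j)) as [_ E1]; [lia|].
 destruct (orth_Z M (Z.of_nat l' - Z.of_nat l + Z.of_nat j)) as [_ E2]; [lia|].
 rewrite E1, E2. ring. Qed.

Lemma pair_sin M m j : (m + j <= M)%nat -> (j <= m)%nat ->
  sm M (fun i => Kf m (node M i) * sin (INR j * node M i)) = INR M / 2 * (INR j * INR (m - j)).
Proof. intros H1 H2. unfold Kf.
 rewrite (sm_ext _ _ (fun i => sm m (fun l => sm m (fun l' => INR l' * (sin ((INR l' - INR l) * node M i) * sin (INR j * node M i)))))).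
 2:{ intros. rewrite <- sm_scalr. apply sm_ext; intros. rewrite <- sm_scalr. apply sm_ext; intros. ring. }
 rewrite sm_swap.
 rewrite (sm_ext _ _ (fun l => sm m (fun l' => INR M / 2 * ((if Nat.eq_dec l' (l + j) then INR l' else 0) - (if Nat.eq_dec l (l' + j) then INR l' else 0))))).
 2:{ intros l Hl. rewrite sm_swap. apply sm_ext; intros l' Hl'. rewrite sm_scal, inner_ss by lia.
     destruct (Nat.eq_dec l' (l+j)); destruct (Nat.eq_dec l (l'+j)); ring. }
 rewrite (sm_ext _ _ (fun l => INR M / 2 * (sm m (fun l' => if Nat.eq_dec l' (l + j) then INR l' else 0) - sm m (fun l' => if Nat.eq_dec l (l' + j) then INR l' else 0)))).
 2:{ intros. rewrite sm_scal, sm_minus. auto. }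
 rewrite sm_scal, sm_minus. f_equal.
 rewrite (sm_ext _ _ (fun l => if lt_dec (l + j) m then INR (l + j) else 0)).
 2:{ intros l Hl. rewrite (sm_delta m (l+j) INR). auto. }
 rewrite (sm_swap m m (fun l l' => if Nat.eq_dec l (l' + j) then INR l' else 0)).
 rewrite (sm_ext _ (fun l' => sm m (fun l => if Nat.eq_dec l (l' + j) then INR l' else 0)) (fun l' => if lt_dec (l' + j) m then INR l' else 0)).
 2:{ intros. rewrite (sm_delta m (i+j) (fun _ => INR i)). auto. }
 rewrite <- sm_minus.
 rewrite (sm_ext _ _ (fun l => INR j * (if lt_dec l (m - j) then 1 else 0))).
 2:{ intros. destruct (lt_dec (i+j) m); destruct (lt_dec i (m-j)); try lia; [rewrite plus_INR|]; ring. }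
 rewrite sm_scal, sm_count. rewrite Nat.min_r by lia. auto. Qed.

Lemma pair_cos M m j : (m + j <= M)%nat ->
  sm M (fun i => Kf m (node M i) * cos (INR j * node M i)) = 0.
Proof. intros H1. unfold Kf.
 rewrite (sm_ext _ _ (fun i => sm m (fun l => sm m (fun l' => INR l' * (sin ((INR l' - INR l) * node M i) * cos (INR j * node M i)))))).
 2:{ intros. rewrite <- sm_scalr. apply sm_ext; intros. rewrite <- sm_scalr. apply sm_ext; intros. ring. }
 rewrite sm_swap. rewrite <- (sm_zero m). apply sm_ext; intros l Hl.
 rewrite sm_swap. rewrite <- (sm_zero m). apply sm_ext; intros l' Hl'.
 rewrite sm_scal, inner_sc by lia. ring. Qed.


Definition Cs m x := sm m (fun l => cos (INR l * x)).
Definition Ss m x := sm m (fun l => sin (INR l * x)).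
Definition Lc m x := sm m (fun l => INR l * cos (INR l * x)).
Definition Ls m x := sm m (fun l => INR l * sin (INR l * x)).

Lemma K_eq m x : Kf m x = Cs m x * Ls m x - Ss m x * Lc m x.
Proof. unfold Kf, Cs, Ss, Lc, Ls. rewrite !sm_mul, <- sm_minus. apply sm_ext; intros.
 rewrite <- sm_minus. apply sm_ext; intros.
 replace ((INR i0 - INR i) * x) with (INR i0 * x - INR i * x) by ring. rewrite sin_minus. ring. Qed.

Lemma CS2 m x : Cs m x * Cs m x + Ss m x * Ss m x = sm m (fun l => sm m (fun l' => cos ((INR l - INR l') * x))).
Proof. unfold Cs, Ss. rewrite !sm_mul, <- sm_plus. apply sm_ext; intros.
 rewrite <- sm_plus. apply sm_ext; intros.
 replace ((INR i - INR i0) * x) with (INR i * x - INR i0 * x) by ring. rewrite cos_minus. ring. Qed.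

Lemma L2 m x : Lc m x * Lc m x + Ls m x * Ls m x = sm m (fun l => sm m (fun l' => INR l * INR l' * cos ((INR l - INR l') * x))).
Proof. unfold Lc, Ls. rewrite !sm_mul, <- sm_plus. apply sm_ext; intros.
 rewrite <- sm_plus. apply sm_ext; intros.
 replace ((INR i - INR i0) * x) with (INR i * x - INR i0 * x) by ring. rewrite cos_minus. ring. Qed.

Lemma node_sum M m (g : nat -> nat -> R) : (m <= M)%nat ->
  sm M (fun i => sm m (fun l => sm m (fun l' => g l l' * cos ((INR l - INR l') * node M i)))) =
  INR M * sm m (fun l => g l l).
Proof. intros H. rewrite sm_swap, <- sm_scal. apply sm_ext; intros l Hl.
 rewrite sm_swap. 
 rewrite (sm_ext _ _ (fun l' => if Nat.eq_dec l' l then INR M * g l l' else 0)).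
 - rewrite (sm_delta m l (fun l' => INR M * g l l')). destruct (lt_dec l m); [auto|lia].
 - intros l' Hl'. rewrite sm_scal. rewrite INR_Zdiff.
   destruct (orth_Z M (Z.of_nat l - Z.of_nat l')) as [E _]; [lia|]. rewrite E.
   destruct (Z.eq_dec _ 0); destruct (Nat.eq_dec l' l); try lia; ring. Qed.

Lemma amgm m a b : 0 < m -> 2 * Rabs a * Rabs b <= m * (a*a) + (b*b) / m.
Proof. intros Hm. 
 assert (0 <= (m * Rabs a - Rabs b)^2) by apply pow2_ge_0.
 assert (Rabs a * Rabs a = a * a) by (rewrite <- Rabs_mult; apply Rabs_right; nra).
 assert (Rabs b * Rabs b = b * b) by (rewrite <- Rabs_mult; apply Rabs_right; nra).
 apply (Rmult_le_reg_l m); [auto|]. field_simplify; [|lra]. nra. Qed.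

Lemma Kabs m x : 0 < INR m ->
  Rabs (Kf m x) <= (INR m * (Cs m x * Cs m x + Ss m x * Ss m x) + (Lc m x * Lc m x + Ls m x * Ls m x) / INR m) / 2.
Proof. intros Hm. rewrite K_eq.
 assert (H1 := amgm (INR m) (Cs m x) (Ls m x) Hm).
 assert (H2 := amgm (INR m) (Ss m x) (Lc m x) Hm).
 eapply Rle_trans; [apply Rabs_triang|]. rewrite Rabs_Ropp, !Rabs_mult.
 apply (Rmult_le_reg_l 2); [lra|]. field_simplify; [|lra].
 apply (Rmult_le_reg_l (INR m)); [lra|]. field_simplify; [|lra].
 assert (INR m * (2 * Rabs (Cs m x) * Rabs (Ls m x)) <= INR m * (INR m * (Cs m x * Cs m x) + Ls m x * Ls m x / INR m)) by (apply Rmult_le_compat_l; lra).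
 assert (INR m * (2 * Rabs (Ss m x) * Rabs (Lc m x)) <= INR m * (INR m * (Ss m x * Ss m x) + Lc m x * Lc m x / INR m)) by (apply Rmult_le_compat_l; lra).
 field_simplify in H. field_simplify in H0. all: try lra. Qed.

Lemma sq_sum m : sm m (fun l => INR l * INR l) <= INR m * (INR m * INR m).
Proof. rewrite <- sm_const. apply sm_le; intros. 
 assert (INR i <= INR m) by (apply le_INR; lia). assert (0 <= INR i) by apply pos_INR. nra. Qed.

Lemma Ksum M m : (0 < m <= M)%nat ->
  sm M (fun i => Rabs (Kf m (node M i))) <= INR M * (INR m * INR m).
Proof. intros H. assert (Hm : 0 < INR m) by (apply lt_0_INR; lia).
 eapply Rle_trans. { apply sm_le; intros. apply Kabs; auto. }
 rewrite (sm_ext _ _ (fun i => /2 * INR m * (Cs m (node M i) * Cs m (node M i) + Ss m (node M i) * Ss m (node M i)) + /2 / INR m * (Lc m (node M i) * Lc m (node M i) + Ls m (node M i) * Ls m (node M i)))).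
 2:{ intros. field. lra. }
 rewrite sm_plus, !sm_scal.
 rewrite (sm_ext _ _ (fun i => sm m (fun l => sm m (fun l' => 1 * cos ((INR l - INR l') * node M i))))).
 2:{ intros. rewrite CS2. apply sm_ext; intros; apply sm_ext; intros; ring. }
 rewrite (sm_ext _ (fun i => Lc m (node M i) * Lc m (node M i) + Ls m (node M i) * Ls m (node M i)) (fun i => sm m (fun l => sm m (fun l' => INR l * INR l' * cos ((INR l - INR l') * node M i))))).
 2:{ intros. rewrite L2. auto. }
 rewrite !(node_sum M m) by lia. rewrite sm_const.
 assert (S2 := sq_sum m). assert (0 < INR M) by (apply lt_0_INR; lia).
 apply (Rmult_le_reg_l (2 * INR m)); [lra|]. field_simplify; [|lra]. nra. Qed.

Definition Wk (n : nat) (x : R) : R := 2 / INR n * (Kf n x - Kf (2 * n) x).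

Lemma W_sin n j : (1 <= n)%nat -> (j <= n)%nat ->
  sm (4 * n) (fun i => Wk n (node (4*n) i) * sin (INR j * node (4*n) i)) = - (INR (4*n) * INR j).
Proof. intros Hn Hj. unfold Wk.
 rewrite (sm_ext _ _ (fun i => 2 / INR n * (Kf n (node (4*n) i) * sin (INR j * node (4*n) i)) - 2 / INR n * (Kf (2*n) (node (4*n) i) * sin (INR j * node (4*n) i)))).
 2:{ intros; ring. }
 rewrite sm_minus, !sm_scal, !pair_sin by lia.
 rewrite !minus_INR by lia. rewrite mult_INR.
 assert (0 < INR n) by (apply lt_0_INR; lia). rewrite (mult_INR 2 n). simpl (INR 2). field. lra. Qed.

Lemma W_cos n j : (1 <= n)%nat -> (j <= n)%nat ->
  sm (4 * n) (fun i => Wk n (node (4*n) i) * cos (INR j * node (4*n) i)) = 0.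
Proof. intros Hn Hj. unfold Wk.
 rewrite (sm_ext _ _ (fun i => 2 / INR n * (Kf n (node (4*n) i) * cos (INR j * node (4*n) i)) - 2 / INR n * (Kf (2*n) (node (4*n) i) * cos (INR j * node (4*n) i)))).
 2:{ intros; ring. }
 rewrite sm_minus, !sm_scal, !pair_cos by lia. ring. Qed.

Lemma W_abs n : (1 <= n)%nat ->
  sm (4 * n) (fun i => Rabs (Wk n (node (4*n) i))) <= 10 * INR n * INR (4 * n).
Proof. intros Hn. assert (0 < INR n) by (apply lt_0_INR; lia). unfold Wk.
 eapply Rle_trans.
 { apply sm_le; intros. rewrite Rabs_mult. rewrite (Rabs_right (2 / INR n)) by (apply Rle_ge; apply Rlt_le; apply Rdiv_lt_0_compat; lra).
   apply Rmult_le_compat_l; [apply Rlt_le; apply Rdiv_lt_0_compat; lra|].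
   unfold Rminus. eapply Rle_trans; [apply Rabs_triang|]. rewrite Rabs_Ropp. apply Rle_refl. }
 rewrite sm_scal, sm_plus.
 assert (A1 := Ksum (4*n) n ltac:(lia)). assert (A2 := Ksum (4*n) (2*n) ltac:(lia)).
 rewrite (mult_INR 2 n) in A2. simpl (INR 2) in A2.
 apply (Rmult_le_reg_l (INR n)); [lra|]. field_simplify; [|lra]. nra. Qed.

Theorem bernstein n (beta : nat -> R) (A : R) : (1 <= n)%nat ->
  (forall x, Rabs (sm (S n) (fun j => beta j * sin (INR j * x))) <= A) ->
  forall t, Rabs (sm (S n) (fun j => INR j * beta j * cos (INR j * t))) <= 10 * INR n * A.
Proof. intros Hn HA t. set (M := (4 * n)%nat).
 assert (HM : 0 < INR M) by (apply lt_0_INR; unfold M; lia).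
 assert (E : sm (S n) (fun j => INR j * beta j * cos (INR j * t)) =
   / INR M * sm M (fun i => Wk n (node M i) * sm (S n) (fun j => beta j * sin (INR j * (t - node M i))))).
 { rewrite (sm_ext M _ (fun i => sm (S n) (fun j => (beta j * sin (INR j * t)) * (Wk n (node M i) * cos (INR j * node M i)) - (beta j * cos (INR j * t)) * (Wk n (node M i) * sin (INR j * node M i))))).
   2:{ intros. rewrite <- sm_scal. apply sm_ext; intros.
       rewrite Rmult_minus_distr_l, sin_minus. ring. }
   rewrite sm_swap, <- sm_scal. apply sm_ext; intros j Hj.
   rewrite sm_minus, !sm_scal. unfold M. rewrite W_sin, W_cos by lia. fold M. field. lra. }
 rewrite E. rewrite Rabs_mult, Rabs_right by (apply Rle_ge; left; apply Rinv_0_lt_compat; lra).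
 assert (A0 : 0 <= A) by (eapply Rle_trans; [apply Rabs_pos| apply (HA 0)]).
 eapply Rle_trans. 
 { apply Rmult_le_compat_l; [left; apply Rinv_0_lt_compat; lra|]. 
   eapply Rle_trans; [apply sm_abs|]. apply sm_le; intros. rewrite Rabs_mult.
   apply Rmult_le_compat_l; [apply Rabs_pos| apply HA]. }
 rewrite sm_scalr. assert (WA := W_abs n Hn). fold M in WA.
 apply (Rmult_le_reg_l (INR M)); [lra|]. field_simplify; [|lra].
 assert (sm M (fun i => Rabs (Wk n (node M i))) * A <= 10 * INR n * INR M * A) by (apply Rmult_le_compat_r; lra).
 lra. Qed.


Inductive CP : nat -> (R -> R) -> Prop :=
| CPc : forall n j c, (j <= n)%nat -> CP n (fun x => c * cos (INR j * x))
| CPadd : forall n f g, CP n f -> CP n g -> CP n (fun x => f x + g x)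
| CPext : forall n f g, CP n f -> (forall x, f x = g x) -> CP n g.

Lemma CP_mono n f : CP n f -> forall m, (n <= m)%nat -> CP m f.
Proof. induction 1; intros m Hm.
 - apply CPc; lia.
 - apply CPadd; auto.
 - eapply CPext; eauto. Qed.

Lemma CP_scal n f c : CP n f -> CP n (fun x => c * f x).
Proof. induction 1.
 - eapply CPext; [apply (CPc n j (c*c0)); auto|]. intros; simpl; ring.
 - eapply CPext; [apply (CPadd n _ _ IHCP1 IHCP2)|]. intros; simpl; ring.
 - eapply CPext; eauto. intros; simpl; rewrite H0; auto. Qed.

Lemma CP_cos n f : CP n f -> CP (S n) (fun x => cos x * f x).
Proof. induction 1.
 - destruct j as [|j].
   + eapply CPext; [apply (CPc (S n) 1 c); lia|]. intros; simpl. rewrite Rmult_0_l, cos_0, Rmult_1_l. ring.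
   + eapply CPext; [apply CPadd; [apply (CPc (S n) (S (S j)) (c/2)); lia | apply (CPc (S n) j (c/2)); lia]|].
     intros x. rewrite !S_INR.
     replace ((INR j + 1 + 1) * x) with ((INR j + 1) * x + x) by ring.
     replace (INR j * x) with ((INR j + 1) * x - x) by ring.
     rewrite cos_plus, cos_minus. field.
 - eapply CPext; [apply (CPadd _ _ _ IHCP1 IHCP2)|]. intros; simpl; ring.
 - eapply CPext; eauto. intros; simpl; rewrite H0; auto. Qed.

Lemma CP_repr n f : CP n f -> exists r : nat -> R, forall x, f x = sm (S n) (fun j => r j * cos (INR j * x)).
Proof. induction 1.
 - exists (fun i => if Nat.eq_dec i j then c else 0). intros x.
   rewrite (sm_ext _ _ (fun i => if Nat.eq_dec i j then c * cos (INR i * x) else 0)).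
   + rewrite (sm_delta (S n) j (fun i => c * cos (INR i * x))). destruct (lt_dec j (S n)); [auto|lia].
   + intros. destruct (Nat.eq_dec i j); ring.
 - destruct IHCP1 as [r1 H1]; destruct IHCP2 as [r2 H2]. exists (fun i => r1 i + r2 i). intros x.
   rewrite H1, H2, <- sm_plus. apply sm_ext; intros; ring.
 - destruct IHCP as [r Hr]. exists r. intros; rewrite <- H0; auto. Qed.

Lemma CP_cheb (X : R -> R) (al be : R) : (forall x, cos (X x) = al + be * cos x) ->
  forall j, CP j (fun x => cos (INR j * X x)) /\ CP (S j) (fun x => cos (INR (S j) * X x)).
Proof. intros HX. induction j as [|j [IH1 IH2]].
 - split.
   + eapply CPext; [apply (CPc 0 0 1); lia|]. intros; simpl. rewrite !Rmult_0_l, cos_0; ring.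
   + eapply CPext; [apply CPadd; [apply (CPc 1 0 al); lia| apply (CPc 1 1 be); lia]|].
     intros x; simpl. rewrite Rmult_0_l, cos_0, !Rmult_1_l, HX. ring.
 - split; auto.
   assert (C1 : CP (S (S j)) (fun x => 2 * al * cos (INR (S j) * X x))) by (apply CP_scal; eapply CP_mono; eauto).
   assert (C2 : CP (S (S j)) (fun x => 2 * be * (cos x * cos (INR (S j) * X x)))) by (apply CP_scal; apply CP_cos; auto).
   assert (C3 : CP (S (S j)) (fun x => -1 * cos (INR j * X x))) by (apply CP_scal; eapply CP_mono; eauto).
   eapply CPext; [apply CPadd; [apply CPadd; [exact C1|exact C2]|exact C3]|].
   intros x. rewrite !S_INR.
   replace ((INR j + 1 + 1) * X x) with ((INR j + 1) * X x + X x) by ring.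
   replace (INR j * X x) with ((INR j + 1) * X x - X x) by ring.
   rewrite cos_plus, cos_minus, HX. ring. Qed.

Lemma trig_sum_sm a b n x : trig_sum a b n x = sm (S n) (fun j => a j * cos (INR j * x) + b j * sin (INR j * x)).
Proof. induction n.
 - simpl. rewrite Rmult_0_l, cos_0, sin_0. ring.
 - cbn [trig_sum]. rewrite IHn. set (F := fun j => a j * cos (INR j * x) + b j * sin (INR j * x)). change (sm (S (S n)) F) with (sm (S n) F + F (S n)). unfold F. ring. Qed.

Lemma even_part a b n x : trig_sum a b n x + trig_sum a b n (-x) = 2 * sm (S n) (fun j => a j * cos (INR j * x)).
Proof. rewrite !trig_sum_sm, <- sm_plus, <- sm_scal. apply sm_ext; intros.
 rewrite Ropp_mult_distr_r_reverse, cos_neg, sin_neg. ring. Qed.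

Lemma CP_sum (X : R -> R) (al be : R) (a : nat -> R) n : (forall x, cos (X x) = al + be * cos x) ->
  forall m, (m <= S n)%nat -> CP n (fun x => sm m (fun j => a j * cos (INR j * X x))).
Proof. intros HX. induction m; intros Hm.
 - eapply CPext; [apply (CPc n 0 0); lia|]. intros; simpl; ring.
 - simpl sm. apply CPadd; [apply IHm; lia|]. apply CP_scal. destruct (CP_cheb X al be HX m) as [H _].
   eapply CP_mono; eauto. lia. Qed.

From Coquelicot Require Import Coquelicot.

Lemma sm_deriv m (f f' : nat -> R -> R) x :
  (forall j, derivable_pt_lim (f j) x (f' j x)) ->
  derivable_pt_lim (fun y => sm m (fun j => f j y)) x (sm m (fun j => f' j x)).
Proof. intros H. induction m; simpl.
 - apply derivable_pt_lim_const.
 - apply (derivable_pt_lim_plus (fun y => sm m (fun j => f j y)) (f m)); auto. Qed.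

Lemma dcos c a th x : derivable_pt_lim (fun y => c * cos (a * (th + y))) x (- (c*a) * sin (a*(th + x))).
Proof. apply is_derive_Reals. auto_derive; [auto | ring]. Qed.
Lemma dsin c a th x : derivable_pt_lim (fun y => c * sin (a * (th + y))) x ((c*a) * cos (a*(th + x))).
Proof. apply is_derive_Reals. auto_derive; [auto | ring]. Qed.
Lemma dlin c th x : derivable_pt_lim (fun y => c * (th + y)) x c.
Proof. apply is_derive_Reals. auto_derive; [auto | ring]. Qed.

Lemma dmulc c x : derivable_pt_lim (fun y => y * c) x c.
Proof. apply is_derive_Reals. auto_derive; [auto | ring]. Qed.

Definition RR n r x := sm (S n) (fun j => r j * cos (INR j * x)).
Definition P1 n r x := sm (S n) (fun j => (- (INR j * r j)) * sin (INR j * x)).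
Definition P2 n r x := sm (S n) (fun j => INR j * (- (INR j * r j)) * cos (INR j * x)).

Lemma dRR n r th x : derivable_pt_lim (fun y => RR n r (th + y)) x (P1 n r (th + x)).
Proof. unfold RR, P1.
 apply (sm_deriv (S n) (fun j y => r j * cos (INR j * (th + y))) (fun j x => - (INR j * r j) * sin (INR j * (th + x)))).
 intros j. replace (- (INR j * r j) * sin (INR j * (th + x))) with (- (r j * INR j) * sin (INR j * (th + x))) by ring.
 apply dcos. Qed.

Lemma dP1 n r th x : derivable_pt_lim (fun y => P1 n r (th + y)) x (P2 n r (th + x)).
Proof. unfold P1, P2.
 apply (sm_deriv (S n) (fun j y => - (INR j * r j) * sin (INR j * (th + y))) (fun j x => INR j * (- (INR j * r j)) * cos (INR j * (th + x)))).
 intros j. replace (INR j * - (INR j * r j) * cos (INR j * (th + x))) with ((- (INR j * r j) * INR j) * cos (INR j * (th + x))) by ring.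
 apply dsin. Qed.

Lemma taylor n r th t B : 0 < t -> (forall x, Rabs (P2 n r x) <= B) ->
  Rabs (RR n r (th + t) - RR n r th - t * P1 n r th) <= B * t * t.
Proof. intros Ht HB.
 destruct (MVT_cor2 (fun u => RR n r (th + u) - u * P1 n r th) (fun u => P1 n r (th + u) - P1 n r th) 0 t Ht) as [c [Ec Hc]].
 { intros c _. apply derivable_pt_lim_minus; [apply dRR|].
   apply dmulc. }
 destruct (MVT_cor2 (fun u => P1 n r (th + u)) (fun u => P2 n r (th + u)) 0 c) as [c' [Ec' Hc']]; [lra| intros; apply dP1|].
 rewrite Rplus_0_r in Ec, Ec'. 
 replace (RR n r (th + t) - RR n r th - t * P1 n r th) with ((P1 n r (th + c) - P1 n r th) * (t - 0)) by lra.
 rewrite Ec'. rewrite !Rabs_mult. 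
 assert (H1 := HB (th + c')). rewrite (Rabs_right (c - 0)) by lra. rewrite (Rabs_right (t - 0)) by lra.
 assert (0 <= Rabs (P2 n r (th + c'))) by apply Rabs_pos.
 assert (Rabs (P2 n r (th + c')) * (c - 0) <= B * t) by nra. nra. Qed.

Lemma main_est n r (D : R -> R) s eps : (1 <= n)%nat -> 0 < s ->
  (forall x, Rabs (RR n r x - D x) <= eps) ->
  (forall x y, Rabs (D x - D y) <= 2 * s * Rabs (x - y)) -> D 0 = 0 ->
  (forall h, 0 <= h <= 1 -> s * h / 2 <= D h) ->
  s / (1300 * INR n) <= eps.
Proof. intros Hn Hs HRD HL HD0 HK.
 assert (HN : 1 <= INR n) by (apply (le_INR 1); lia).
 assert (Heps : 0 <= eps) by (eapply Rle_trans; [apply Rabs_pos| apply (HRD 0)]).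
 set (E := fun y => exists x, y = Rabs (P1 n r x)).
 assert (bE : bound E).
 { exists (sm (S n) (fun j => Rabs (- (INR j * r j)))). intros y [x ->].
   unfold P1. eapply Rle_trans; [apply sm_abs|]. apply sm_le; intros. rewrite Rabs_mult.
   assert (Rabs (sin (INR i * x)) <= 1) by (apply Rabs_le; apply SIN_bound).
   assert (0 <= Rabs (- (INR i * r i))) by apply Rabs_pos. nra. }
 destruct (completeness E bE (ex_intro _ _ (ex_intro _ 0 eq_refl))) as [m1 [Hub Hlub]].
 assert (Hm1 : forall x, Rabs (P1 n r x) <= m1) by (intros x; apply Hub; exists x; auto).
 assert (Hm10 : 0 <= m1) by (eapply Rle_trans; [apply Rabs_pos|apply (Hm1 0)]).
 assert (HB : forall x, Rabs (P2 n r x) <= 10 * INR n * m1).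
 { intros x. unfold P2. apply (bernstein n (fun j => - (INR j * r j)) m1 Hn). intros y. apply Hm1. }
 set (t := / (20 * INR n)).
 assert (Ht : 0 < t) by (unfold t; apply Rinv_0_lt_compat; lra).
 assert (Hm1b : m1 <= 2 * s + 40 * INR n * eps + m1 / 2).
 { apply Hlub. intros y [x ->].
   assert (T := taylor n r x t _ Ht HB).
   assert (A1 := HRD (x + t)). assert (A2 := HRD x). assert (A3 := HL (x + t) x).
   replace (x + t - x) with t in A3 by ring. rewrite (Rabs_right t) in A3 by lra.
   assert (Hd : Rabs (RR n r (x + t) - RR n r x) <= 2 * s * t + 2 * eps).
   { replace (RR n r (x + t) - RR n r x) with ((RR n r (x + t) - D (x + t)) - (RR n r x - D x) + (D (x+t) - D x)) by ring.
     eapply Rle_trans; [apply Rabs_triang|]. eapply Rle_trans; [apply Rplus_le_compat_r; apply Rabs_triang|].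
     rewrite Rabs_Ropp. lra. }
   assert (Hp : t * Rabs (P1 n r x) <= 2 * s * t + 2 * eps + 10 * INR n * m1 * t * t).
   { replace (t * Rabs (P1 n r x)) with (Rabs (t * P1 n r x)) by (rewrite Rabs_mult, (Rabs_right t); lra).
     replace (t * P1 n r x) with ((RR n r (x + t) - RR n r x) - (RR n r (x + t) - RR n r x - t * P1 n r x)) by ring.
     eapply Rle_trans; [apply Rabs_triang|]. rewrite Rabs_Ropp. lra. }
   apply (Rmult_le_reg_l t); auto.
   replace (t * (2 * s + 40 * INR n * eps + m1 / 2)) with (2 * s * t + 2 * eps + 10 * INR n * m1 * t * t); [lra|].
   unfold t. field. lra. }
 assert (Hm1c : m1 <= 4 * s + 80 * INR n * eps) by lra.
 set (h := / (160 * INR n)).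
 assert (Hh : 0 < h) by (unfold h; apply Rinv_0_lt_compat; lra).
 assert (Hh1 : h <= 1) by (unfold h; rewrite <- Rinv_1; apply Rinv_le_contravar; lra).
 assert (T := taylor n r 0 h _ Hh HB).
 assert (P10 : P1 n r 0 = 0).
 { unfold P1. transitivity (sm (S n) (fun _ => 0)); [apply sm_ext; intros; rewrite Rmult_0_r, sin_0; ring | apply sm_zero]. }
 rewrite P10, Rplus_0_l in T.
 assert (A1 := HRD h). assert (A2 := HRD 0). assert (A3 := HK h (conj (Rlt_le _ _ Hh) Hh1)).
 rewrite HD0 in A2.
 assert (Hk : s * h / 2 - 2 * eps <= 10 * INR n * m1 * h * h).
 { apply Rabs_le_between in T. apply Rabs_le_between in A1. apply Rabs_le_between in A2. lra. }
 assert (Hk2 : 10 * INR n * m1 * h * h <= 10 * INR n * (4 * s + 80 * INR n * eps) * h * h).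
 { apply Rmult_le_compat_r; [lra|]. apply Rmult_le_compat_r; [lra|]. apply Rmult_le_compat_l; lra. }
 assert (Hfin : s * h / 2 - 2 * eps <= 10 * INR n * (4 * s + 80 * INR n * eps) * h * h) by lra.
 unfold h in Hfin.
 assert (Hfin2 : 4 * s <= 5200 * INR n * eps).
 { apply (Rmult_le_compat_l (2560 * INR n)) in Hfin; [|lra].
   replace (2560 * INR n * (s * / (160 * INR n) / 2 - 2 * eps)) with (8 * s - 5120 * INR n * eps) in Hfin by (field; lra).
   replace (2560 * INR n * (10 * INR n * (4 * s + 80 * INR n * eps) * / (160 * INR n) * / (160 * INR n))) with (4 * s + 80 * INR n * eps) in Hfin by (field; lra).
   lra. }
 apply (Rmult_le_reg_l (1300 * INR n)); [lra|]. field_simplify; lra. Qed.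


Lemma sinlb w : 0 <= w <= 1 -> w/2 <= sin w.
Proof. intros H. assert (PI4 := PI2_3_2). assert (H1 := sin_bound w 0).
 unfold sin_approx, sin_term in H1. simpl in H1. 
 destruct H1 as [H1 _]; try lra. 
 assert (w*(w*1) <= 1) by nra. nra. Qed.

Lemma sin_mvt_lo a b : a < b -> -(PI/3) <= a -> b <= PI/3 -> (b - a) / 2 <= sin b - sin a.
Proof. intros Hab Ha Hb. assert (HP := PI_RGT_0).
 destruct (MVT_cor2 sin cos a b Hab) as [c [Ec Hc]]; [intros; apply derivable_pt_lim_sin|].
 rewrite Ec. assert (cos c >= 1/2).
 { rewrite <- cos_PI3. destruct (Rle_dec 0 c).
   - apply Rle_ge, cos_decr_1; lra.
   - rewrite <- (cos_neg c). apply Rle_ge, cos_decr_1; lra. }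
 nra. Qed.

Lemma sin_mvt_hi a b : a < b -> Rabs (sin b - sin a) <= b - a.
Proof. intros Hab.
 destruct (MVT_cor2 sin cos a b Hab) as [c [Ec Hc]]; [intros; apply derivable_pt_lim_sin|].
 rewrite Ec. assert (H := COS_bound c). apply Rabs_le. split; nra. Qed.

Lemma sin_lip x y : Rabs (sin x - sin y) <= Rabs (x - y).
Proof. destruct (Rtotal_order x y) as [H|[H|H]].
 - rewrite <- Rabs_Ropp, (Rabs_left (x - y)) by lra.
   replace (- (sin x - sin y)) with (sin y - sin x) by ring. replace (- (x - y)) with (y - x) by ring.
   apply sin_mvt_hi; auto.
 - subst. replace (y - y) with 0 by ring. replace (sin y - sin y) with 0 by ring. lra.
 - rewrite (Rabs_right (x - y)) by lra. apply sin_mvt_hi; auto. Qed.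

Lemma sin_lo x y : -(PI/3) <= x <= PI/3 -> -(PI/3) <= y <= PI/3 -> Rabs (x - y) <= 2 * Rabs (sin x - sin y).
Proof. intros Hx Hy. destruct (Rtotal_order x y) as [H|[H|H]].
 - assert (H1 := sin_mvt_lo x y H ltac:(lra) ltac:(lra)).
   rewrite <- (Rabs_Ropp (x - y)), <- (Rabs_Ropp (sin x - sin y)).
   rewrite !Rabs_right by lra. lra.
 - subst. replace (y - y) with 0 by ring. rewrite Rabs_R0. assert (0 <= Rabs (sin y - sin y)) by apply Rabs_pos. lra.
 - assert (H1 := sin_mvt_lo y x H ltac:(lra) ltac:(lra)).
   rewrite !Rabs_right by lra. lra. Qed.

Lemma asin_range u s b : 0 < b <= PI -> s = sin (b/4) -> -s <= u <= s ->
  -(b/4) <= asin u <= b/4.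
Proof. intros Hb Hs Hu. assert (HP := PI_RGT_0). assert (B := asin_bound u).
 assert (Hs1 : s <= 1) by (rewrite Hs; apply SIN_bound).
 assert (Hsa : sin (asin u) = u) by (apply sin_asin; lra).
 split.
 - destruct (Rle_dec (-(b/4)) (asin u)); auto. exfalso.
   assert (sin (asin u) < sin (-(b/4))) by (apply sin_increasing_1; lra).
   rewrite sin_neg, <- Hs in H. lra.
 - destruct (Rle_dec (asin u) (b/4)); auto. exfalso.
   assert (sin (b/4) < sin (asin u)) by (apply sin_increasing_1; lra).
   rewrite <- Hs in H. lra. Qed.

Theorem corollary3p5 :
  exists c1 : R, 0 < c1 /\
    forall (b : R), 0 < b <= PI ->
    forall (n : nat), (1 <= n)%nat ->
    forall (a k : R) (T : R -> R), is_trig_poly n T ->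
      exists x : R, -b <= x <= b /\
        c1 * b / INR n <= Rabs (F1 x + (a * x + k) - T x).
Proof.
 exists (/20000). split; [lra|]. intros b Hb n Hn a k T [aa [bb HT]].
 assert (HP := PI_RGT_0). assert (HP4 := PI_4). assert (HP3 := PI2_3_2).
 assert (HN : 1 <= INR n) by (apply (le_INR 1); lia).
 set (g := fun x => F1 x + (a * x + k) - T x).
 destruct (classic (exists x, -b <= x <= b /\ / 20000 * b / INR n <= Rabs (g x))) as [Hex|Hno]; [exact Hex|].
 exfalso. set (eps := / 20000 * b / INR n).
 assert (Hg : forall x, -b <= x <= b -> Rabs (g x) <= eps).
 { intros x Hx. destruct (Rle_dec (Rabs (g x)) eps) as [Hle|Hnle]; auto. exfalso. apply Hno. exists x. split; auto. apply Rnot_le_lt in Hnle. unfold eps in Hnle. lra. }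
 set (s := sin (b/4)).
 assert (Hs8 : b/8 <= s) by (unfold s; replace (b/8) with ((b/4)/2) by field; apply sinlb; lra).
 assert (Hs1 : s <= 1) by (unfold s; apply SIN_bound).
 set (X := fun x => 2 * asin (s * sin (x/2))).
 assert (HuR : forall x, -s <= s * sin (x/2) <= s).
 { intros x. assert (H := SIN_bound (x/2)). split; nra. }
 assert (HXr : forall x, -(b/4) <= asin (s * sin (x/2)) <= b/4).
 { intros x. apply (asin_range _ s b); auto. }
 assert (HXc : forall x, cos (X x) = (1 - s * s) + (s * s) * cos x).
 { intros x. unfold X. rewrite cos_2a_sin, sin_asin by (assert (H := HuR x); lra).
   replace x with (2 * (x/2)) at 3 by field. rewrite cos_2a_sin. ring. }
 set (D := fun x => Rabs (X x)).
 assert (HCP : CP n (fun x => sm (S n) (fun j => aa j * cos (INR j * X x)) + (- k) * cos (INR 0 * x))).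
 { apply CPadd; [apply (CP_sum X _ _ aa n HXc); lia| apply CPc; lia]. }
 destruct (CP_repr _ _ HCP) as [r Hr].
 assert (HRD : forall x, Rabs (RR n r x - D x) <= eps).
 { intros x. unfold RR. rewrite <- Hr. simpl (INR 0). rewrite Rmult_0_l, cos_0.
   assert (E := even_part aa bb n (X x)). rewrite <- !HT in E.
   assert (HX : -b <= X x <= b) by (unfold X; assert (H := HXr x); lra).
   assert (G1 := Hg (X x) HX). assert (G2 := Hg (- X x) ltac:(lra)).
   unfold g, F1 in G1, G2. rewrite Rabs_Ropp in G2. unfold D.
   replace (sm (S n) (fun j => aa j * cos (INR j * X x)) + - k * 1 - Rabs (X x)) with
     (- ((Rabs (X x) + (a * X x + k) - T (X x)) + (Rabs (X x) + (a * - X x + k) - T (- X x))) / 2) by lra.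
   unfold Rdiv. rewrite Rabs_mult, Rabs_Ropp, (Rabs_right (/2)) by lra.
   assert (H := Rabs_triang (Rabs (X x) + (a * X x + k) - T (X x)) (Rabs (X x) + (a * - X x + k) - T (- X x))).
   lra. }
 assert (HL : forall x y, Rabs (D x - D y) <= 2 * s * Rabs (x - y)).
 { intros x y. unfold D. eapply Rle_trans; [apply Rabs_triang_inv2|]. unfold X.
   replace (2 * asin (s * sin (x / 2)) - 2 * asin (s * sin (y / 2))) with (2 * (asin (s * sin (x / 2)) - asin (s * sin (y / 2)))) by ring.
   rewrite Rabs_mult, Rabs_right by lra.
   assert (H1 := sin_lo (asin (s * sin (x / 2))) (asin (s * sin (y / 2))) ltac:(assert (H := HXr x); lra) ltac:(assert (H := HXr y); lra)).
   rewrite !sin_asin in H1 by (assert (H := HuR x); assert (H' := HuR y); lra).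
   replace (s * sin (x / 2) - s * sin (y / 2)) with (s * (sin (x/2) - sin (y/2))) in H1 by ring.
   rewrite Rabs_mult, (Rabs_right s) in H1 by lra.
   assert (H2 := sin_lip (x/2) (y/2)). replace (x/2 - y/2) with ((x - y) * /2) in H2 by field.
   rewrite Rabs_mult, (Rabs_right (/2)) in H2 by lra.
   assert (s * Rabs (sin (x / 2) - sin (y / 2)) <= s * (Rabs (x - y) * / 2)) by (apply Rmult_le_compat_l; lra).
   lra. }
 assert (HD0 : D 0 = 0).
 { unfold D, X. replace (0/2) with 0 by field. rewrite sin_0, Rmult_0_r, asin_0, Rmult_0_r, Rabs_R0. auto. }
 assert (HK : forall h, 0 <= h <= 1 -> s * h / 2 <= D h).
 { intros h Hh. unfold D, X. set (u := s * sin (h/2)).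
   assert (Hu0 : 0 <= u) by (unfold u; assert (0 <= sin (h/2)) by (apply sin_ge_0; lra); nra).
   assert (Hul : s * (h/2/2) <= u) by (unfold u; apply Rmult_le_compat_l; [lra| apply sinlb; lra]).
   assert (Hsa : sin (asin u) = u) by (apply sin_asin; unfold u; assert (H := HuR h); lra).
   assert (HA := HXr h). fold u in HA.
   assert (HA0 : 0 <= asin u).
   { destruct (Rle_dec 0 (asin u)); auto. assert (sin (asin u) < 0) by (apply sin_lt_0_var; lra). lra. }
   assert (HA1 : u <= asin u).
   { destruct (Req_dec (asin u) 0) as [E|E]. - rewrite E, sin_0 in Hsa. lra.
     - assert (sin (asin u) < asin u) by (apply sin_lt_x; lra). lra. }
   rewrite Rabs_right by lra. lra. }
 assert (Hs0 : 0 < s) by lra.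
 assert (M := main_est n r D s eps Hn Hs0 HRD HL HD0 HK).
 unfold eps in M.
 assert (b / 8 / (1300 * INR n) <= s / (1300 * INR n)) by (apply Rmult_le_compat_r; [left; apply Rinv_0_lt_compat; lra| lra]).
 assert (Hc : b / 8 / (1300 * INR n) <= / 20000 * b / INR n) by lra.
 apply (Rmult_le_compat_l (10400 * INR n)) in Hc; [|lra].
 replace (10400 * INR n * (b / 8 / (1300 * INR n))) with b in Hc by (field; lra).
 replace (10400 * INR n * (/ 20000 * b / INR n)) with (10400 / 20000 * b) in Hc by (field; lra).
 lra.
Qed.
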